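(* Let $K$ be a commutative field whose characteristic is not equal to two, and let $G=T(2,K)$ be the group of invertible upper triangular matrices $\begin{bmatrix}\alpha & t\\ 0&\beta\end{bmatrix}$ with $\alpha,\beta\in K^*$, $t\in K$. Then for every real Banach space $E$, Jensen's functional equation $f(xy)+f(xy^{-1})=2f(x)$ is stable for the pair $(G;E)$: for every function $f\colon G\to E$ for which there is $c>0$ with $\|f(xy)+f(xy^{-1})-2f(x)\|\le c$ for all $x,y\in G$, there exists $j\colon G\to E$ with $j(xy)+j(xy^{-1})=2j(x)$ for all $x,y\in G$ such that $j-f$ is bounded on $G$.
   Context: $K^*$ denotes the multiplicative group of nonzero elements of $K$. *)

(* Defs.v *)
From HB Require Import structures.
From mathcomp Require Import all_boot all_order all_algebra.
From mathcomp Require Import all_classical all_reals all_analysis.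
Set Implicit Arguments. Unset Strict Implicit. Unset Printing Implicit Defensive.
Import Order.TTheory GRing.Theory Num.Theory.
Local Open Scope ring_scope.

(* T(2,K): invertible upper triangular 2x2 matrices over K, viewed as a
   subset of the ring 'M[K]_2 (group law = matrix product, inverse = ring
   inverse of 'M[K]_2, i.e. invmx). *)
Definition T2 (K : fieldType) : pred 'M[K]_2 :=
  [pred A : 'M[K]_2 | (A ord_max ord0 == 0) && (A \in unitmx)].

Arguments T2 K : clear implicits.

Definition jensen_sol (K : fieldType) (R : realType)
  (E : normedModType R) (j : 'M[K]_2 -> E) : Prop :=
  forall x y, x \in T2 K -> y \in T2 K ->
    j (x * y) + j (x * y^-1) = 2 *: j x.

(* Main.v *)
Require Import Defs.
From HB Require Import structures.
From mathcomp Require Import all_boot all_order all_algebra.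
From mathcomp Require Import all_classical all_reals all_analysis.
From mathcomp Require Import ring lra.
Import Order.TTheory GRing.Theory Num.Theory.
Local Open Scope ring_scope.
Set Implicit Arguments. Unset Strict Implicit. Unset Printing Implicit Defensive.
Import numFieldNormedType.Exports.
Local Open Scope classical_set_scope.
Local Open Scope ring_scope.
Section Hyers.
Variables (R : realType) (E : completeNormedModType R) (T : Type).
Variables (P : T -> Prop) (mul : T -> T -> T) (h : T -> E) (d : R).
Hypothesis d0 : 0 <= d.
Hypothesis Pmul : forall x y, P x -> P y -> P (mul x y).
Hypothesis sqM : forall x y, P x -> P y -> mul (mul x y) (mul x y) = mul (mul x x) (mul y y).
Hypothesis hq : forall x y, P x -> P y -> `|h (mul x y) - h x - h y| <= d.

Let sq x := mul x x.
Let it n x := iter n sq x.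
Let Pit n x : P x -> P (it n x).
Proof. by move=> Px; elim: n => //= n IH; exact: Pmul. Qed.
Let itM n x y : P x -> P y -> it n (mul x y) = mul (it n x) (it n y).
Proof. move=> Px Py; elim: n => //= n IH; rewrite /sq IH sqM //; exact: Pit. Qed.

Let s x n : E := (2^-1 : R) ^+ n *: h (it n x).
Let u x k : E := s x k.+1 - s x k.

Let u_le x k : P x -> `|u x k| <= d * (2^-1) ^+ k.+1.
Proof.
move=> Px; rewrite /u /s /=.
have -> : (2^-1 : R) ^+ k.+1 *: h (sq (it k x)) - (2^-1) ^+ k *: h (it k x)
   = (2^-1 : R) ^+ k.+1 *: (h (mul (it k x) (it k x)) - h (it k x) - h (it k x)).
  have -> : (2^-1 : R) ^+ k = (2^-1) ^+ k.+1 * 2.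
    by rewrite exprS mulrAC mulVf ?pnatr_eq0 // mul1r.
  rewrite -scalerA -[in RHS](addrA _ (- _) (- _)) -opprD [in RHS]scalerBr.
  by rewrite scaler_nat mulr2n.
rewrite normrZ mulrC ger0_norm ?exprn_ge0 ?invr_ge0 ?ler0n //.
by rewrite ler_wpM2r ?exprn_ge0 ?invr_ge0 ?ler0n // hq //; apply: Pit.
Qed.

Let geo_sum n : \sum_(0 <= k < n) d * (2^-1 : R) ^+ k.+1 = d * (1 - (2^-1) ^+ n).
Proof.
elim: n => [|n IH]; first by rewrite big_nil expr0 subrr mulr0.
rewrite big_nat_recr //= IH exprS; field; (try by []); lra.
Qed.

Let seriesE x n : series (u x) n = s x n - h x.
Proof.
rewrite seriesEnat /= telescope_sumr // /s /= expr0 scale1r //.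
Qed.

Let s_near x n : P x -> `|s x n - h x| <= d.
Proof.
move=> Px; rewrite -seriesE seriesEnat /=.
apply: le_trans (ler_norm_sum _ _ _) _.
apply: le_trans (_ : \sum_(0 <= k < n) d * (2^-1 : R) ^+ k.+1 <= _).
  by apply: ler_sum => k _; apply: u_le.
rewrite geo_sum ler_piMr // lerBlDr lerDl exprn_ge0 // invr_ge0 ler0n //.
Qed.

Let s_cvg x : P x -> cvgn (s x).
Proof.
move=> Px.
have : cvgn (series (u x)).
  apply: normed_cvg.
  apply: (@series_le_cvg _ _ (geometric (d / 2) (2^-1))).
  - by move=> n /=.
  - by move=> n; rewrite /geometric /= mulr_ge0 ?exprn_ge0 ?divr_ge0 ?invr_ge0 ?ler0n.
  - by move=> n; rewrite /geometric /= (le_trans (u_le _ Px)) // exprS mulrA.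
  apply: cvgP; apply: cvg_geometric_series.
  by rewrite ger0_norm ?invr_ge0 ?ler0n // invf_lt1 // ltr1n.
move=> cv.
have -> : s x = (fun n => series (u x) n + h x).
  by apply: funext => n; rewrite seriesE subrK.
by apply: is_cvgD => //; apply: is_cvg_cst.
Qed.

Lemma hyers : exists phi : T -> E,
  (forall x y, P x -> P y -> phi (mul x y) = phi x + phi y) /\
  (forall x, P x -> `|phi x - h x| <= d).
Proof.
exists (fun x => limn (s x)); split.
  move=> x y Px Py.
  have cx := s_cvg Px; have cy := s_cvg Py; have cxy := s_cvg (Pmul Px Py).
  set L := limn (s (mul x y)) - limn (s x) - limn (s y).
  have c1 : (fun n => s (mul x y) n - s x n - s y n) @ \oo --> L.
    by apply: cvgB; [apply: cvgB|].
  have c0 : (fun n => s (mul x y) n - s x n - s y n) @ \oo --> 0.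
    apply: norm_cvg0.
    apply: (@squeeze_cvgr _ _ _ _ (fun _ => 0) (geometric d (2^-1))).
    - near=> n; rewrite normr_ge0 /=.
      rewrite /s itM // -!scalerBr normrZ /geometric mulrC ger0_norm ?exprn_ge0 ?invr_ge0 ?ler0n //.
      by rewrite ler_wpM2r ?exprn_ge0 ?invr_ge0 ?ler0n // hq //; apply: Pit.
    - exact: cvg_cst.
    - apply: cvg_geometric.
      by rewrite ger0_norm ?invr_ge0 ?ler0n // invf_lt1 // ltr1n.
  have L0 : L = 0 by apply: (cvg_unique _ c1 c0).
  by apply/eqP; rewrite -subr_eq0 opprD addrA; apply/eqP.
move=> x Px; rewrite leNgt; apply/negP => H.
have cv : (fun n => s x n - h x) @ \oo --> limn (s x) - h x.
  by apply: (@cvgB _ _ _ _ _ (s x) (fun=> h x)); [exact: s_cvg | exact: cvg_cst].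
have [N _ HN] := cvgr_norm_gt _ cv _ H.
by have := HN N (leqnn N); rewrite ltNge s_near.
Unshelve. all: by end_near.
Qed.
End Hyers.
Section Mat.
Variable K : fieldType.
Definition mk (a t b : K) : 'M[K]_2 :=
  \matrix_(i, j) (if (i : nat) == 0%N then (if (j : nat) == 0%N then a else t)
                  else (if (j : nat) == 0%N then 0 else b)).

Lemma mkM a t b a' t' b' : mk a t b * mk a' t' b' = mk (a * a') (a * t' + t * b') (b * b').
Proof.
apply/matrixP => i j; rewrite !mxE !big_ord_recl big_ord0 !mxE /=.
case: i => [[|[|i]] Hi] //=; case: j => [[|[|j]] Hj] //=; ring.
Qed.

Lemma mk1 : mk 1 0 1 = 1.
Proof.
apply/matrixP => i j; rewrite !mxE.
by case: i => [[|[|i]] Hi] //=; case: j => [[|[|j]] Hj].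
Qed.

Lemma mkE (x : 'M[K]_2) : x ord_max ord0 = 0 ->
  x = mk (x ord0 ord0) (x ord0 ord_max) (x ord_max ord_max).
Proof.
move=> H; apply/matrixP => i j; rewrite !mxE.
case: i => [[|[|i]] Hi] //=; case: j => [[|[|j]] Hj] //=;
  rewrite -?H; congr (x _ _); exact: val_inj.
Qed.

Lemma unitE (x : 'M[K]_2) : (x \is a GRing.unit) = (x \in unitmx).
Proof. by []. Qed.

Lemma mk_unit a t b : a != 0 -> b != 0 -> mk a t b \is a GRing.unit.
Proof.
move=> a0 b0; rewrite unitE.
have /mulmx1_unit [] // : mk a t b *m mk a^-1 (- (t / (a * b))) b^-1 = 1%:M.
rewrite mulmxE mkM idmxE -mk1; congr mk; by field; rewrite ?mulf_neq0 ?a0 ?b0.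
Qed.

Lemma mkV a t b : a != 0 -> b != 0 -> (mk a t b)^-1 = mk a^-1 (- (t / (a * b))) b^-1.
Proof.
move=> a0 b0.
have e : mk a t b * mk a^-1 (- (t / (a * b))) b^-1 = 1.
  rewrite mkM -mk1; congr mk; by field; rewrite ?mulf_neq0 ?a0 ?b0.
by rewrite -[RHS](mulKr (mk_unit t a0 b0)) e mulr1.
Qed.

Lemma mk_T2 a t b : a != 0 -> b != 0 -> mk a t b \in T2 K.
Proof.
move=> a0 b0; rewrite inE -unitE mk_unit // andbT mxE //.
Qed.

Lemma T2P x : x \in T2 K ->
  [/\ x = mk (x ord0 ord0) (x ord0 ord_max) (x ord_max ord_max),
      x ord0 ord0 != 0 & x ord_max ord_max != 0].
Proof.
rewrite inE => /andP [/eqP H U]; have xE := mkE H.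
move: U; rewrite -unitE => U.
split => //.
- apply/eqP => a0.
  have := congr1 (fun M : 'M[K]_2 => M ord0 ord0) (mulVr U).
  rewrite /= -mulmxE !mxE !big_ord_recl big_ord0 /=.
  have -> : x (lift ord0 ord0) ord0 = 0 by rewrite -H; congr (x _ _); exact: val_inj.
  by rewrite a0 !mulr0 !addr0 => /esym/eqP; rewrite oner_eq0.
apply/eqP => b0.
have := congr1 (fun M : 'M[K]_2 => M ord_max ord_max) (mulrV U).
rewrite /= -mulmxE !mxE !big_ord_recl big_ord0 /=.
have -> : x ord_max ord0 = 0 by [].
have -> : x ord_max (lift ord0 ord0) = 0 by rewrite -b0; congr (x _ _); exact: val_inj.
by rewrite !mul0r !addr0 => /esym/eqP; rewrite oner_eq0.
Qed.
Lemma T2ex x : x \in T2 K -> exists a t b, [/\ a != 0, b != 0 & x = mk a t b].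
Proof. by move=> /T2P [xE a0 b0]; exists (x ord0 ord0), (x ord0 ord_max), (x ord_max ord_max). Qed.

Lemma T2unit x : x \in T2 K -> x \is a GRing.unit.
Proof. by move=> /T2ex [a [t [b [a0 b0 ->]]]]; apply: mk_unit. Qed.

Lemma T2M x y : x \in T2 K -> y \in T2 K -> x * y \in T2 K.
Proof.
move=> /T2ex [a [t [b [a0 b0 ->]]]] /T2ex [a' [t' [b' [a0' b0' ->]]]].
by rewrite mkM mk_T2 // mulf_neq0.
Qed.

Lemma T2V x : x \in T2 K -> x^-1 \in T2 K.
Proof.
move=> /T2ex [a [t [b [a0 b0 ->]]]].
by rewrite mkV // mk_T2 // invr_eq0.
Qed.
End Mat.

Section Ids.
Variable V : zmodType.
Lemma shiftJ (a b x e : V) : (a - e) + (b - e) - ((x - e) + (x - e)) = a + b - (x + x).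
Proof. by rewrite (addrACA a) (addrACA x) opprD (addrACA (a + b)) subrr addr0. Qed.
Lemma idConj (A B S X : V) : A - X = (A + B - S) - (X + B) + S.
Proof. by rewrite addrAC subrK opprD addrA addrAC addrK. Qed.
Lemma idTri (x x' d : V) : (x - d) + (x - d) = (x + x' - (d + d)) - (x' - x).
Proof.
by rewrite opprB [RHS]addrAC (addrACA x x') subrr addr0 opprD (addrACA x (-d)).
Qed.
Lemma idAdd (p q r a b : V) : (p - a - b) + (p - a - b) = (p + q - (a + a)) + (p + r - (b + b)) - (q + r).
Proof.
rewrite (addrACA (p + q)) (addrACA p q) [RHS]addrAC addrK -opprD (addrACA a a).
by rewrite -[p - a - b]addrA -opprD (addrACA p) -opprD.
Qed.
Lemma idFin (e ph fd fx : V) : e + ph - fx = (ph - (fd - e)) + ((fd - e) - (fx - e)).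
Proof. by rewrite addrA subrK opprB addrA addrC [LHS]addrC (addrC e). Qed.
Lemma idJ (e P Q Q' : V) : e + (P + Q) + (e + (P + Q')) = (e + P) + (e + P) + (Q + Q').
Proof. by rewrite (addrA e P Q) (addrA e P Q') addrACA. Qed.
End Ids.


Theorem theorem3p14 (K : fieldType) (hK : (2%N \notin [pchar K]))
  (R : realType) (E : completeNormedModType R) (f : 'M[K]_2 -> E) :
  (exists c : R, 0 < c /\
     forall x y, x \in T2 K -> y \in T2 K ->
       `| f (x * y) + f (x * y^-1) - 2 *: f x | <= c) ->
  exists j : 'M[K]_2 -> E,
    jensen_sol j /\
    exists M : R, forall x, x \in T2 K -> `| j x - f x | <= M.
Proof.
move=> [c [c0 Hc]].
set e := f 1.
pose g x := f x - e.
have J : forall x y, x \in T2 K -> y \in T2 K ->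
    `|g (x * y) + g (x * y^-1) - (g x + g x)| <= c.
  move=> x y Hx Hy; rewrite /g shiftJ -mulr2n -scaler_nat; exact: Hc.
have T1 : (1 : 'M[K]_2) \in T2 K by rewrite -mk1 mk_T2 // oner_neq0.
have g1 : g 1 = 0 by rewrite /g subrr.
have O : forall y, y \in T2 K -> `|g y + g y^-1| <= c.
  by move=> y Hy; have := J 1 y T1 Hy; rewrite !mul1r g1 addr0 subr0.
pose s := mk (-1) 0 (1 : K).
have s0 : (-1 : K) != 0 by rewrite oppr_eq0 oner_neq0.
have sT : s \in T2 K by apply: mk_T2 => //; apply: oner_neq0.
have sV : s^-1 = s.
  rewrite /s mkV ?oner_neq0 //; congr mk; rewrite ?invrN1 ?invr1 //.
  by rewrite mul0r oppr0.
have ss : s * s = 1 by rewrite /s mkM -mk1; congr mk; ring.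
have Sg : `|g s + g s| <= c.
  by have := J s s sT sT; rewrite sV ss g1 add0r sub0r normrN.
have Conj : forall x, x \in T2 K -> `|g (s * x * s) - g x| <= c + c + c.
  move=> x Hx; have := J s (x * s) sT (T2M Hx sT).
  rewrite invrM ?T2unit // sV !mulrA ss mul1r => H.
  rewrite (idConj _ (g x^-1) (g s + g s)).
  apply: le_trans (ler_normD _ _) _; apply: lerD => //.
  by apply: le_trans (ler_normB _ _) _; apply: lerD => //; apply: O.
have Tri : forall a t b : K, a != 0 -> b != 0 -> `|g (mk a t b) - g (mk a 0 b)| <= 2 * c.
  move=> a t b a0 b0.
  have Hd : mk a 0 b * mk 1 (t / a) 1 = mk a t b by rewrite mkM; congr mk; field; rewrite ?oner_eq0 ?mulf_neq0 /=.
  have Hd' : mk a 0 b * (mk 1 (t / a) 1)^-1 = mk a (- t) b.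
    by rewrite mkV ?oner_neq0 // mkM; congr mk; field; rewrite ?oner_eq0 /=.
  have Hs : s * mk a t b * s = mk a (- t) b by rewrite /s !mkM; congr mk; ring.
  have H1 := J (mk a 0 b) (mk 1 (t / a) 1) (mk_T2 0 a0 b0) (mk_T2 _ (oner_neq0 K) (oner_neq0 K)).
  rewrite Hd Hd' in H1.
  have H2 := Conj _ (mk_T2 t a0 b0); rewrite Hs in H2.
  have : `|(g (mk a t b) - g (mk a 0 b)) *+ 2| <= c + (c + c + c).
    rewrite mulr2n (idTri _ (g (mk a (- t) b))); apply: le_trans (ler_normB _ _) _; exact: lerD.
  rewrite normrMn mulr2n => H; lra.
have Add : forall a b a' b' : K, a != 0 -> b != 0 -> a' != 0 -> b' != 0 ->
    `|g (mk (a * a') 0 (b * b')) - g (mk a 0 b) - g (mk a' 0 b')| <= 2 * c.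
  move=> a b a' b' a0 b0 a0' b0'.
  have T1' := mk_T2 0 a0 b0; have T2' := mk_T2 0 a0' b0'.
  have H1 := J _ _ T1' T2'; have H2 := J _ _ T2' T1'.
  have H3 := O _ (T2M T1' (T2V T2')).
  have E1 : mk a 0 b * mk a' 0 b' = mk (a * a') 0 (b * b') by rewrite mkM; congr mk; ring.
  have E2 : mk a' 0 b' * mk a 0 b = mk (a * a') 0 (b * b') by rewrite mkM; congr mk; ring.
  have E3 : mk a 0 b * (mk a' 0 b')^-1 = mk (a / a') 0 (b / b').
    by rewrite mkV // mkM; congr mk; field; rewrite ?a0 ?b0 ?a0' ?b0'.
  have E4 : mk a' 0 b' * (mk a 0 b)^-1 = mk (a' / a) 0 (b' / b).
    by rewrite mkV // mkM; congr mk; field; rewrite ?a0 ?b0 ?a0' ?b0'.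
  have E5 : (mk (a / a') 0 (b / b'))^-1 = mk (a' / a) 0 (b' / b).
    by rewrite mkV ?mulf_neq0 ?invr_eq0 //; congr mk; field; rewrite ?a0 ?b0 ?a0' ?b0'.
  rewrite E1 E3 in H1; rewrite E2 E4 in H2; rewrite E3 E5 in H3.
  have : `|(g (mk (a * a') 0 (b * b')) - g (mk a 0 b) - g (mk a' 0 b')) *+ 2| <= c + c + c.
    rewrite mulr2n (idAdd _ (g (mk (a / a') 0 (b / b'))) (g (mk (a' / a) 0 (b' / b)))).
    apply: le_trans (ler_normB _ _) _; apply: lerD => //.
    by apply: le_trans (ler_normD _ _) _; apply: lerD.
  rewrite normrMn mulr2n => H; lra.
have c20 : 0 <= 2 * c by lra.
pose P := fun p : K * K => p.1 != 0 /\ p.2 != 0.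
pose mulp := fun p q : K * K => (p.1 * q.1, p.2 * q.2).
have Pmul : forall p q, P p -> P q -> P (mulp p q).
  by move=> p q [p1 p2] [q1 q2]; split; apply: mulf_neq0.
have sqM : forall p q, P p -> P q -> mulp (mulp p q) (mulp p q) = mulp (mulp p p) (mulp q q).
  by move=> p q _ _; rewrite /mulp /=; congr pair; ring.
have hq : forall p q, P p -> P q ->
    `|g (mk (mulp p q).1 0 (mulp p q).2) - g (mk p.1 0 p.2) - g (mk q.1 0 q.2)| <= 2 * c.
  by move=> p q [p1 p2] [q1 q2]; apply: Add.
have [phi [phiM phiB]] := @hyers R E (K * K)%type P mulp
  (fun p => g (mk p.1 0 p.2)) (2 * c) c20 Pmul sqM hq.
have phi1 : phi (1, 1) = 0.
  have := phiM (1, 1) (1, 1) (conj (oner_neq0 K) (oner_neq0 K)) (conj (oner_neq0 K) (oner_neq0 K)).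
  rewrite /mulp /= mulr1 -[X in X = _]addr0 => /addrI ->.
  by [].
exists (fun x => e + phi (x ord0 ord0, x ord_max ord_max)); split.
  move=> x y Hx Hy.
  have [a [t [b [a0 b0 ->]]]] := T2ex Hx.
  have [a' [t' [b' [a0' b0' ->]]]] := T2ex Hy.
  rewrite mkV // !mkM !mxE /=.
  have -> := phiM (a, b) (a', b') (conj a0 b0) (conj a0' b0').
  have -> := phiM (a, b) (a'^-1, b'^-1) (conj a0 b0) (conj (invr_neq0 a0') (invr_neq0 b0')).
  rewrite idJ.
  have <- := phiM (a', b') (a'^-1, b'^-1) (conj a0' b0') (conj (invr_neq0 a0') (invr_neq0 b0')).
  rewrite /mulp /= (mulfV a0') (mulfV b0') phi1 addr0.
  by rewrite scaler_nat mulr2n.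
exists (2 * c + 2 * c) => x Hx.
have [a [t [b [a0 b0 ->]]]] := T2ex Hx.
rewrite !mxE /= (idFin e (phi (a, b)) (f (mk a 0 b)) (f (mk a t b))).
apply: le_trans (ler_normD _ _) _; apply: lerD.
  exact: (phiB (a, b) (conj a0 b0)).
by rewrite distrC; apply: Tri.
Qed.
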